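(* Let $k\ge2$, let $A=\{a_1,\dots,a_n\}$ be a sorted multiset of positive integers ($a_1\le\dots\le a_n$), let $p$ be an integer with $1\le p\le n-k+1$, and let $\varepsilon\in(0,1)$. Set $\delta=\frac{\varepsilon\cdot a_p}{3n}$ and $a_i^r=\lfloor a_i/\delta\rfloor$ for $i\in[n]$, $A_r=\{a_1^r,\dots,a_n^r\}$. Let $(S_1,\dots,S_k)$ be an optimal solution of the $k$-SSR$_R$ instance $(A_r,p)$ (this is the output of the algorithm that rounds $A$ to $A_r$ and solves $(A_r,p)$ exactly), and let $(S_1^*,\dots,S_k^* )$ be an optimal solution of the $k$-SSR$_R$ instance $(A,p)$. Then $$\mathcal{R}(S_1,\dots,S_k,A)\le(1+\varepsilon)\cdot\mathcal{R}(S_1^*,\dots,S_k^*,A).$$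
   Context: $[n]=\{1,\dots,n\}$; elements of sets are indices. For a multiset $B=\{b_1,\dots,b_n\}$ of nonnegative integers and $S\subseteq[n]$, $\Sigma(S,B)=\sum_{i\in S}b_i$; for pairwise disjoint $S_1,\dots,S_k\subseteq[n]$, $\mathcal{R}(S_1,\dots,S_k,B)=\max_i\Sigma(S_i,B)/\min_i\Sigma(S_i,B)$ if the minimum is positive and $+\infty$ otherwise. The $k$-SSR$_R$ instance $(B,p)$ (with $b_1\le\dots\le b_n$, $1\le p\le n-k+1$): find pairwise disjoint $S_1,\dots,S_k\subseteq[n]$ with $\max(S_1)=p$ and $\max(S_i)>p$ for $1<i\le k$ minimizing $\mathcal{R}(S_1,\dots,S_k,B)$. *)

(* Defs.v *)
From HB Require Import structures.
From mathcomp Require Import all_boot all_order all_algebra.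
Set Implicit Arguments. Unset Strict Implicit. Unset Printing Implicit Defensive.
Import Order.TTheory GRing.Theory Num.Theory.

(* Conventions.
   - A multiset B = {b_1,...,b_n} is a function B : nat -> nat, used on the
     indices 1..n (values outside [1,n] are irrelevant).
   - A subset S of [n] is a finite set S : {set 'I_n}; the ordinal i : 'I_n
     stands for the index i.+1 in [n] = {1,...,n}.
   - A k-tuple (S_1,...,S_k) is S : 'I_k -> {set 'I_n}; S_1 is the part of
     ordinal value 0, S_j is the part of ordinal value j-1.
   - Ratios take values in an archimedean real field R; +infinity is
     represented by None (type option R). *)

Section SSR.
Variable R : archiRealFieldType.
Local Open Scope ring_scope.

Definition Sigma (n : nat) (S : {set 'I_n}) (B : nat -> nat) : nat :=
  (\sum_(i in S) B i.+1)%N.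

(* max(S) for S a subset of [n] (1-based); equals 0 only when S is empty *)
Definition setmax (n : nat) (S : {set 'I_n}) : nat :=
  (\max_(i in S) i.+1)%N.

Definition maxSigma (n k : nat) (S : 'I_k -> {set 'I_n}) (B : nat -> nat) : nat :=
  (\max_(j < k) Sigma (S j) B)%N.

(* min_i Sigma(S_i, B) (correct for k >= 1) *)
Definition minSigma (n k : nat) (S : 'I_k -> {set 'I_n}) (B : nat -> nat) : nat :=
  (\big[minn/maxSigma S B]_(j < k) Sigma (S j) B)%N.

Definition ratioR (n k : nat) (S : 'I_k -> {set 'I_n}) (B : nat -> nat)
  : option R :=
  if (0 < minSigma S B)%N
  then Some ((maxSigma S B)%:R / (minSigma S B)%:R)
  else None.

Definition ext_le (x y : option R) : bool :=
  match x, y with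
  | _, None => true
  | None, Some _ => false
  | Some a, Some b => a <= b
  end.

Definition ext_scale (c : R) (x : option R) : option R :=
  match x with
  | Some a => Some (c * a)
  | None => None
  end.

Definition sorted_ms (n : nat) (B : nat -> nat) : Prop :=
  forall i j, (1 <= i)%N -> (i <= j)%N -> (j <= n)%N -> (B i <= B j)%N.

Definition feasible (n k : nat) (p : nat) (S : 'I_k -> {set 'I_n}) : Prop :=
  (forall j1 j2 : 'I_k, j1 != j2 -> [disjoint S j1 & S j2]) /\
  (forall j : 'I_k, val j = 0%N -> setmax (S j) = p) /\
  (forall j : 'I_k, val j <> 0%N -> (p < setmax (S j))%N).

Definition optimal (n k : nat) (B : nat -> nat) (p : nat)
  (S : 'I_k -> {set 'I_n}) : Prop :=
  feasible p S /\
  forall T : 'I_k -> {set 'I_n}, feasible p T -> ext_le (ratioR S B) (ratioR T B).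

End SSR.

(* Main.v *)
Require Import Defs.
From HB Require Import structures.
From mathcomp Require Import all_boot all_order all_algebra.
From mathcomp Require Import ring lra.
Import Order.TTheory GRing.Theory Num.Theory.
From mathcomp Require Import zify.
Set Implicit Arguments. Unset Strict Implicit. Unset Printing Implicit Defensive.

Lemma bigmin_le (k : nat) (F : 'I_k -> nat) x0 j :
  (\big[minn/x0]_(i < k) F i <= F j)%N.
Proof.
rewrite unlock /reducebig.
have : j \in index_enum 'I_k by rewrite mem_index_enum.
elim: (index_enum 'I_k) => //= a r IH; rewrite inE => /orP [/eqP <-|/IH h].
  by rewrite geq_minl.
by rewrite /= geq_min h orbT.
Qed.

Lemma bigmin_att (k : nat) (F : 'I_k -> nat) x0 :
  (exists j, x0 = F j) -> exists j, \big[minn/x0]_(i < k) F i = F j.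
Proof.
move=> h0; apply: (big_ind (fun x => exists j, x = F j)) => //.
  move=> x y [j1 ->] [j2 ->]; rewrite /minn; case: ifP; eauto.
by move=> i _; exists i.
Qed.


Lemma maxSigma_att n k (T : 'I_k -> {set 'I_n}) B : (0 < k)%N ->
  exists j, maxSigma T B = Sigma (T j) B.
Proof.
move=> hk; have hc : (0 < #|'I_k|)%N by rewrite card_ord.
rewrite /maxSigma; have [j ->] := @bigop.eq_bigmax _ (fun j => Sigma (T j) B) hc.
by exists j.
Qed.

Lemma maxSigma_ge n k (T : 'I_k -> {set 'I_n}) B j :
  (Sigma (T j) B <= maxSigma T B)%N.
Proof. exact: (@bigop.leq_bigmax _ (fun j => Sigma (T j) B)). Qed.

Lemma minSigma_att n k (T : 'I_k -> {set 'I_n}) B : (0 < k)%N ->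
  exists j, minSigma T B = Sigma (T j) B.
Proof. move=> hk; apply: bigmin_att; exact: maxSigma_att. Qed.

Lemma minSigma_le n k (T : 'I_k -> {set 'I_n}) B j :
  (minSigma T B <= Sigma (T j) B)%N.
Proof. exact: bigmin_le. Qed.

Lemma setmax_att n (S : {set 'I_n}) :
  setmax S = 0%N \/ exists2 i, i \in S & setmax S = i.+1.
Proof.
rewrite /setmax; apply: (big_ind (fun x => x = 0%N \/ exists2 i, i \in S & x = i.+1)).
- by left.
- move=> x y hx hy; rewrite /maxn; case: ifP => _; [exact: hy | exact: hx].
- by move=> i hi; right; exists i.
Qed.

Lemma feasible_lb n k (A : nat -> nat) p (T : 'I_k -> {set 'I_n}) :
  sorted_ms n A -> (1 <= p)%N -> feasible p T -> forall j, (A p <= Sigma (T j) A)%N.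
Proof.
move=> hs hp [_ [h0 h1]] j.
have hgt : (p <= setmax (T j))%N.
  case: (eqVneq (val j) 0%N) => hj; first by rewrite h0.
  by apply: ltnW; apply: h1; apply/eqP.
case: (@setmax_att _ (T j)) => [e|[i hi e]]; first by move: hgt; rewrite e leqn0 => /eqP hp0; rewrite hp0 in hp.
rewrite /Sigma (bigD1 i) //=; apply: leq_trans (leq_addr _ _).
rewrite e in hgt; apply: hs => //; exact: ltn_ord.
Qed.
Local Open Scope ring_scope.
Lemma alg (R : realFieldType) (M m Ms ms Mr mr Mrs mrs d a eps e : R) :
  0 < eps -> eps < 1 -> 0 < d -> 0 < a -> e = eps * a / 3 ->
  a <= m -> a <= ms -> ms <= Ms -> 0 < mr -> 0 < mrs -> 0 <= Mr ->
  M <= d * Mr + e -> d * mr <= m -> Mr * mrs <= Mrs * mr ->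
  d * Mrs <= Ms -> ms <= d * mrs + e ->
  M * ms <= (1 + eps) * Ms * m.
Proof.
move=> he0 he1 hd ha -> ham hams hmsMs hmr hmrs hMr hM hm hopt hMs hms.
set P := d * Mr.
have hP : 0 <= P by rewrite /P mulr_ge0 // ltW.
have h1 : (d * Mr) * (d * mrs) <= (d * Mrs) * (d * mr).
  have : d * d * (Mr * mrs) <= d * d * (Mrs * mr).
    by rewrite ler_wpM2l // mulr_ge0 // ltW.
  by rewrite -!mulrA [Mr * (d * mrs)]mulrCA [Mrs * (d * mr)]mulrCA.
have h2 : (d * Mrs) * (d * mr) <= Ms * m.
  have hMrs : 0 <= Mrs.
    have : 0 <= Mrs * mr by apply: le_trans hopt; rewrite mulr_ge0 // ltW.
    by rewrite pmulr_lge0.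
  by apply: ler_pM => //; rewrite mulr_ge0 // ltW.
have hdmrs : 0 < d * mrs by rewrite mulr_gt0.
have h3 : P * (ms - eps * a / 3) <= Ms * m.
  apply: le_trans h2; apply: le_trans h1; rewrite /P ler_wpM2l //; lra.
have h4 : (3 - eps) * (P * ms) <= 3 * (Ms * m).
  have h6 : eps * (P * a) <= eps * (P * ms) by rewrite ler_wpM2l ?ler_wpM2l // ltW.
  move: h3; rewrite mulrBr => h3; lra.
have h5 : eps * a / 3 * ms <= eps * (Ms * m) / 3.
  have h7 : a * ms <= Ms * m by rewrite mulrC; apply: ler_pM; lra.
  have h8 : eps * (a * ms) <= eps * (Ms * m) by rewrite ler_wpM2l // ltW.
  lra.
have hQ : 0 <= Ms * m by nra.
apply: le_trans (_ : P * ms + eps * a / 3 * ms <= _).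
  have : M * ms <= (P + eps * a / 3) * ms by rewrite ler_wpM2r //; lra.
  by rewrite mulrDl.
have h9 : eps * (2 * eps - 3) * (Ms * m) <= 0.
  apply: mulr_le0_ge0 => //; nra.
nra.
Qed.
Lemma round_bounds (R : archiRealFieldType) n (T : {set 'I_n}) (A : nat -> nat) (d : R) :
  0 < d ->
  d * (Sigma T (fun i => Num.truncn ((A i)%:R / d)))%:R <= (Sigma T A)%:R /\
  (Sigma T A)%:R <= d * (Sigma T (fun i => Num.truncn ((A i)%:R / d)))%:R + n%:R * d.
Proof.
move=> hd; rewrite /Sigma !natr_sum mulr_sumr; split.
  apply: ler_sum => i _.
  have h0 : 0 <= (A i.+1)%:R / d by rewrite divr_ge0 // ltW.
  have /andP [h1 _] := truncn_itv h0.
  by rewrite [_ * _]mulrC -ler_pdivlMr.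
apply: (@le_trans _ _ (\sum_(i in T) (d * (Num.truncn ((A i.+1)%:R / d))%:R + d))).
  apply: ler_sum => i _.
  have h0 : 0 <= (A i.+1)%:R / d by rewrite divr_ge0 // ltW.
  have /andP [_ h2] := truncn_itv h0.
  move: h2; rewrite ltr_pdivrMr // -natr1 mulrDl mul1r => h2.
  rewrite [d * _]mulrC; lra.
rewrite big_split /= lerD2l sumr_const.
rewrite mulrC (mulr_natr d n); apply: ler_wpMn2l; first exact: ltW.
by apply: leq_trans (max_card _) _; rewrite card_ord.
Qed.

Theorem theorem14 (R : archiRealFieldType) (n k : nat) (A : nat -> nat) (p : nat)
  (eps : R)
  (hk : (2 <= k)%N)
  (hApos : forall i, (1 <= i)%N -> (i <= n)%N -> (0 < A i)%N)
  (hAsorted : sorted_ms n A)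
  (hp1 : (1 <= p)%N) (hp2 : (p + k <= n + 1)%N)
  (heps0 : 0 < eps) (heps1 : eps < 1)
  (S Sstar : 'I_k -> {set 'I_n}) :
  let delta : R := eps * (A p)%:R / (3 * n)%:R in
  let Ar : nat -> nat := fun i => Num.truncn ((A i)%:R / delta) in
  optimal R Ar p S ->
  optimal R A p Sstar ->
  ext_le (ratioR R S A) (ext_scale (1 + eps) (ratioR R Sstar A)).
Proof.
move=> delta Ar [hSf hSopt] [hSsf _].
have hn : (0 < n)%N by lia.
have hk0 : (0 < k)%N by lia.
have hpn : (p <= n)%N by lia.
set a : R := (A p)%:R.
have ha : 0 < a by rewrite /a ltr0n; apply: hApos.
have hd : 0 < delta by rewrite /delta !mulr_gt0 // invr_gt0 ltr0n muln_gt0.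
have he : n%:R * delta = eps * a / 3.
  rewrite /delta natrM -/a; field.
  by rewrite pnatr_eq0 -lt0n.
have rb := fun T : {set 'I_n} => round_bounds T A hd.
have facts : forall T : 'I_k -> {set 'I_n}, feasible p T ->
  [/\ a <= (minSigma T A)%:R,
      (maxSigma T A)%:R <= delta * (maxSigma T Ar)%:R + eps * a / 3,
      delta * (minSigma T Ar)%:R <= (minSigma T A)%:R,
      delta * (maxSigma T Ar)%:R <= (maxSigma T A)%:R &
      [/\ (minSigma T A)%:R <= delta * (minSigma T Ar)%:R + eps * a / 3,
      (0 < minSigma T Ar)%N, (minSigma T A <= maxSigma T A)%N & (0 < minSigma T A)%N]].
  move=> T hT.
  have lb := feasible_lb hAsorted hp1 hT.
  have [jM eM] := maxSigma_att T A hk0.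
  have [jm em] := minSigma_att T A hk0.
  have [jMr eMr] := maxSigma_att T Ar hk0.
  have [jmr emr] := minSigma_att T Ar hk0.
  have hdle : forall x y : nat, (x <= y)%N -> delta * x%:R <= delta * y%:R.
    by move=> x y hxy; rewrite ler_pM2l // ler_nat.
  have ha' : a <= (minSigma T A)%:R by rewrite em ler_nat; exact: lb.
  split.
  - exact: ha'.
  - rewrite eM; have [_ h] := rb (T jM); rewrite he in h.
    apply: le_trans h _; rewrite lerD2r; apply: hdle; exact: maxSigma_ge.
  - rewrite em; have [h _] := rb (T jm); apply: le_trans h; apply: hdle.
    exact: minSigma_le.
  - rewrite eMr; have [h _] := rb (T jMr); apply: le_trans h _; rewrite ler_nat.
    exact: maxSigma_ge.
  - split.
    + rewrite emr; have [_ h] := rb (T jmr); rewrite he in h; apply: le_trans h.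
      rewrite ler_nat; exact: minSigma_le.
    + rewrite emr -(ltr0n R); have [_ h] := rb (T jmr); rewrite he in h.
      have h2 : a <= (Sigma (T jmr) A)%:R by rewrite ler_nat; exact: lb.
      have h4 : eps * a < a by rewrite -[X in _ < X]mul1r ltr_pM2r.
      have h3 : 0 < delta * (Sigma (T jmr) Ar)%:R by lra.
      by rewrite pmulr_rgt0 in h3.
    + apply: leq_trans (maxSigma_ge T A jm); exact: minSigma_le.
    + by rewrite -(ltr0n R); apply: lt_le_trans ha'.
have [a1 b1 c1 d1 [e1 f1 g1 h1]] := facts S hSf.
have [a2 b2 c2 d2 [e2 f2 g2 h2]] := facts Sstar hSsf.
have hopt := hSopt Sstar hSsf.
rewrite /ratioR f1 f2 /= in hopt.
rewrite /ratioR h1 h2 /=.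
set M := ((maxSigma S A)%:R : R); set m := ((minSigma S A)%:R : R).
set Ms := ((maxSigma Sstar A)%:R : R); set ms := ((minSigma Sstar A)%:R : R).
set Mr := ((maxSigma S Ar)%:R : R); set mr := ((minSigma S Ar)%:R : R).
set Mrs := ((maxSigma Sstar Ar)%:R : R); set mrs := ((minSigma Sstar Ar)%:R : R).
have hmr : 0 < mr :> R by rewrite ltr0n.
have hmrs : 0 < mrs :> R by rewrite ltr0n.
have hm : 0 < m :> R by rewrite ltr0n.
have hms : 0 < ms :> R by rewrite ltr0n.
have hopt' : Mr * mrs <= Mrs * mr.
  by move: hopt; rewrite ler_pdivrMr // mulrAC ler_pdivlMr.
have key := alg heps0 heps1 hd ha (erefl _) a1 a2 (_ : ms <= Ms) hmr hmrs (ler0n _ _)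
  b1 c1 hopt' d2 e2.
have hmM : ms <= Ms by rewrite ler_nat.
rewrite ler_pdivrMr // mulrA mulrAC ler_pdivlMr //.
exact: key hmM.
Qed.
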